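(* Let $G$ be a complete $s$-partite graph ($s\ge 2$), and suppose exactly $r$ of its parts consist of a single vertex. Then $\chi_1(G)=s-r+\left\lceil \frac{r}{2}\right\rceil$.
   Context: A map $f:V(G)\to\{1,\dots,k\}$ is a $1$-relaxed $k$-coloring if every vertex $u$ has at most one neighbor $v$ with $f(v)=f(u)$; $\chi_1(G)$ is the minimum $k$ for which such a coloring exists. *)

(* Defs.v *)
From mathcomp Require Import all_boot.
Set Implicit Arguments. Unset Strict Implicit. Unset Printing Implicit Defensive.

Definition relaxed1 (T : finType) (e : rel T) (k : nat) (f : {ffun T -> 'I_k}) : bool :=
  [forall u, #|[set v | e u v && (f v == f u)]| <= 1].

Definition has_relaxed1 (T : finType) (e : rel T) (k : nat) : bool :=
  [exists f : {ffun T -> 'I_k}, relaxed1 e f].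

Lemma has_relaxed1_card (T : finType) (e : rel T) : has_relaxed1 e #|T|.
Proof.
apply/existsP; exists [ffun x => enum_rank x]; apply/forallP => u.
apply: leq_trans (_ : #|[set u]| <= 1); last by rewrite cards1.
apply: subset_leq_card; apply/subsetP => v; rewrite !inE !ffunE.
by case/andP=> _ /eqP /enum_rank_inj ->.
Qed.

Definition chi1 (T : finType) (e : rel T) : nat :=
  ex_minn (ex_intro (fun k => has_relaxed1 e k) _ (has_relaxed1_card e)).

Definition complete_multipartite (T : finType) (e : rel T) (s : nat) (p : T -> 'I_s) : Prop :=
  (forall i : 'I_s, exists x, p x = i) /\ (forall x y, e x y = (p x != p y)).

Definition singleton_parts (T : finType) (s : nat) (p : T -> 'I_s) : nat :=
  #|[set i : 'I_s | #|[set x | p x == i]| == 1]|.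

(* Main.v *)
Require Import Defs.
From mathcomp Require Import all_boot.
From mathcomp Require Import zify.
Set Implicit Arguments.

Definition rk (s : nat) (A : {set 'I_s}) (i : 'I_s) : nat :=
  #|[set j | (j \in A) && (j < i)]|.
Arguments rk {s}.

Lemma rk_lt s (A : {set 'I_s}) (i j : 'I_s) : i \in A -> i < j -> rk A i < rk A j.
Proof.
move=> iA ij; apply: proper_card; apply/properP; split.
  apply/subsetP => k; rewrite !inE => /andP[-> ki] /=; exact: ltn_trans ki ij.
by exists i; rewrite !inE ?iA ?ij ?ltnn.
Qed.

Lemma rk_inj s (A : {set 'I_s}) (i j : 'I_s) :
  i \in A -> j \in A -> rk A i = rk A j -> i = j.
Proof.
move=> iA jA E; case: (ltngtP i j) => [h|h|h].
- by have := @rk_lt _ A i j iA h; rewrite E ltnn.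
- by have := @rk_lt _ A j i jA h; rewrite E ltnn.
- exact: val_inj.
Qed.

Lemma rk_bound s (A : {set 'I_s}) (i : 'I_s) : i \in A -> rk A i < #|A|.
Proof.
move=> iA; apply: proper_card; apply/properP; split.
  by apply/subsetP => k; rewrite !inE => /andP[].
by exists i; rewrite // !inE ltnn andbF.
Qed.

Lemma upper (T : finType) (e : rel T) s (p : T -> 'I_s) k' (h : 'I_s -> nat) :
 (forall x y, e x y = (p x != p y)) ->
 (forall i, h i < k'.+1) ->
 (forall u v1 v2, p u != p v1 -> p u != p v2 -> h (p v1) = h (p u) ->
     h (p v2) = h (p u) -> v1 = v2) ->
 has_relaxed1 e k'.+1.
Proof.
move=> He hb Hu; apply/existsP; exists [ffun x => inord (h (p x))].
apply/forallP => u; apply/card_le1_eqP => v1 v2.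
rewrite !inE !ffunE !He => /andP[n1 /eqP q1] /andP[n2 /eqP q2].
apply: (Hu u) => //.
- by move/(congr1 val): q2; rewrite /= !inordK.
- by move/(congr1 val): q1; rewrite /= !inordK.
Qed.

Lemma lower (T : finType) (e : rel T) s (p : T -> 'I_s) k (f : {ffun T -> 'I_k}) :
  complete_multipartite e p -> relaxed1 e f -> 2 * s <= 2 * k + singleton_parts p.
Proof.
move=> [Hsurj He] /forallP Hf.
pose M c := [set i | [exists x, (p x == i) && (f x == c)]].
pose ch c i := if i \in M c then (if #|M c| == 1 then 2 else 1) else 0.
have MP : forall c i, reflect (exists x, p x = i /\ f x = c) (i \in M c).
  move=> c i; rewrite inE; apply: (iffP existsP) => [[x /andP[/eqP a /eqP b]]|[x [a b]]].
    by exists x.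
  by exists x; rewrite a b !eqxx.
have M2 : forall c, #|M c| <= 2.
  move=> c; case: (set_0Vmem (M c)) => [->|[i0 /MP [x [px fx]]]]; first by rewrite cards0.
  have i0M : i0 \in M c by apply/MP; exists x.
  rewrite (cardsD1 i0) i0M add1n ltnS.
  apply: (@leq_trans #|p @: [set v | e x v && (f v == f x)]|); last first.
    exact: leq_trans (leq_imset_card _ _) (Hf x).
  apply: subset_leq_card; apply/subsetP => j /setD1P [ji /MP [y [py fy]]].
  apply/imsetP; exists y => //; rewrite inE He px py eq_sym ji fy fx eqxx.
  done.
have C2 : forall c, \sum_i ch c i <= 2.
  move=> c; rewrite /ch -big_mkcond /= sum_nat_const.
  have := M2 c; case: (#|M c|) => [|[|[|]]] //.
pose d i := if #|[set x | p x == i]| == 1 then 1 else 2.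
have D : forall i, d i <= \sum_c ch c i.
  move=> i; have [x0 px0] := Hsurj i.
  have x0M : i \in M (f x0) by apply/MP; exists x0.
  rewrite (bigD1 (f x0)) //=.
  have chx : ch (f x0) i = (if #|M (f x0)| == 1 then 2 else 1) by rewrite /ch x0M.
  rewrite chx; case: ifP => [_|M1]; first by rewrite /d; case: ifP; rewrite ?addn0 ?leq_addr.
  rewrite /d; case: ifP => [_|P1]; first by apply: leq_trans (leq_addr _ _).
  have x0P : x0 \in [set x | p x == i] by rewrite inE px0.
  have [y yP] : exists y, y \in [set x | p x == i] :\ x0.
    case: (set_0Vmem ([set x | p x == i] :\ x0)) => [E|[y0 Hy0]]; last by exists y0.
    by move: P1; rewrite (cardsD1 x0) x0P E cards0.
  move: yP => /setD1P [yx0]; rewrite inE => /eqP py.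
  have yM : i \in M (f y) by apply/MP; exists y.
  case: (eqVneq (f y) (f x0)) => [fyx|fyx].
    have : 0 < #|M (f x0) :\ i|.
      move: M1; rewrite (cardsD1 i) x0M.
      by case: #|M (f x0) :\ i|.
    move=> /card_gt0P [j /setD1P [ji /MP [z [pz fz]]]].
    have := card_le1_eqP (Hf z) x0 y.
    rewrite !inE !He fyx fz px0 py pz ji eqxx => /(_ isT isT) E.
    by move: yx0; rewrite E eqxx.
  rewrite (bigD1 (f y)) //= /ch yM.
  by case: ifP.
have Dsum : 2 * s = \sum_i d i + singleton_parts p.
  rewrite /singleton_parts -sum1_card [X in _ = _ + X]big_mkcond -big_split /=.
  rewrite -[s in LHS]card_ord -sum1_card big_distrr /=.
  apply: eq_bigr => i _; rewrite inE /d; by case: ifP.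
rewrite Dsum leq_add2r.
apply: (@leq_trans (\sum_i \sum_c ch c i)); first exact: leq_sum => i _.
rewrite exchange_big /=.
rewrite -[k in 2 * k]card_ord -sum1_card big_distrr /=.
by apply: leq_sum => c _; rewrite muln1.
Qed.


Unset Implicit Arguments.

Theorem theorem4p3 (T : finType) (e : rel T) (s r : nat) (p : T -> 'I_s) :
  2 <= s ->
  complete_multipartite e p ->
  singleton_parts p = r ->
  chi1 e = s - r + uphalf r.
Proof.
move=> s2 [Hsurj He] Hr.
have rs : r <= s.
  by rewrite -Hr /singleton_parts; apply: leq_trans (max_card _) _; rewrite card_ord.
have Hlow : forall k, has_relaxed1 e k -> s - r + uphalf r <= k.
  move=> k /existsP [f Hf]; have := @lower _ e s p k f (conj Hsurj He) Hf; rewrite Hr; lia.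
have Hup : has_relaxed1 e (s - r + uphalf r).
  pose Sg := [set i : 'I_s | #|[set x | p x == i]| == 1].
  have cS : #|Sg| = r by rewrite -Hr.
  pose N := ~: Sg.
  have cN : #|N| = s - r by have := cardsC Sg; rewrite /N card_ord cS; lia.
  pose h i := if i \in Sg then #|N| + rk Sg i %/ 2 else rk N i.
  have hN : forall i, i \notin Sg -> h i < #|N|.
    by move=> i iS; rewrite /h (negbTE iS); apply: rk_bound; rewrite inE.
  have hS : forall i, i \in Sg -> #|N| <= h i.
    by move=> i iS; rewrite /h iS leq_addr.
  have kE : s - r + uphalf r = (s - r + uphalf r).-1.+1 by lia.
  rewrite kE; apply: (@upper _ e s p _ h He).
    move=> i; rewrite -kE /h; case: ifP => iS.
      have := rk_bound iS; rewrite cN cS; lia.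
    have iN : i \in N by rewrite inE iS.
    have := rk_bound iN; rewrite cN; lia.
  move=> u v1 v2 n1 n2 e1 e2.
  have inS : forall v, p u != p v -> h (p v) = h (p u) -> (p u \in Sg) && (p v \in Sg).
    move=> v nv ev; case Hu: (p u \in Sg); case Hv: (p v \in Sg) => //=.
    - have := hN (p v) (negbT Hv); have := hS (p u) Hu; lia.
    - have := hN (p u) (negbT Hu); have := hS (p v) Hv; lia.
    - move: ev; rewrite /h /= Hu Hv => /(@rk_inj _ N).
      by rewrite /N !in_setC Hu Hv => /(_ isT isT) E; rewrite E eqxx in nv.
  have /andP [uS v1S] := inS v1 n1 e1.
  have /andP [_ v2S] := inS v2 n2 e2.
  move: e1 e2; rewrite /h /= uS v1S v2S => e1 e2.
  have a1 : rk Sg (p v1) <> rk Sg (p u).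
    by move/(@rk_inj _ Sg _ _ v1S uS) => E; rewrite E eqxx in n1.
  have a2 : rk Sg (p v2) <> rk Sg (p u).
    by move/(@rk_inj _ Sg _ _ v2S uS) => E; rewrite E eqxx in n2.
  have : rk Sg (p v1) = rk Sg (p v2) by lia.
  move/(@rk_inj _ Sg _ _ v1S v2S) => E.
  move: v1S; rewrite inE => /eqP /eq_leq /card_le1_eqP H.
  by apply: H; rewrite inE ?E eqxx.
rewrite /chi1; case: ex_minnP => m Hm Hmin.
by apply/eqP; rewrite eqn_leq Hmin // Hlow.
Qed.
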